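(* Let $F_i\colon \mathbb{R}^n \rightrightarrows \mathbb{R}^m$, $i=1,\ldots,p$, be nearly convex set-valued mappings and let $F=\bigcap_{i=1}^p F_i$, i.e. $F(x)=\bigcap_{i=1}^pF_i(x)$. Assume $$\bigcap_{i=1}^p \mathrm{ri}(\mathrm{gph}\, F_i)\neq\emptyset.$$ Then for any $\varepsilon \ge 0$, any $(\bar x, \bar y)\in \mathrm{gph}\, F$ and any $v\in\mathbb{R}^m$, $$D^*_\varepsilon F (\bar x, \bar y) (v)= \bigcup_{\substack{\varepsilon_1\geq 0,\ldots, \varepsilon_p\geq 0,\\ \varepsilon_1+\cdots+\varepsilon_p=\varepsilon}} \Big\{D^*_{\varepsilon_1} F_1 (\bar x, \bar y)(v_1)+\cdots+ D^*_{\varepsilon_p} F_p (\bar x, \bar y)(v_p) \;\Big|\; v_1+\cdots+v_p =v\Big\}.$$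
   Context: A set $D$ is nearly convex if there is a convex $E$ with $E\subset D\subset\overline{E}$. A set-valued mapping is nearly convex if its graph $\mathrm{gph}\,F=\{(x,y)\mid y\in F(x)\}$ is nearly convex. $\mathrm{ri}\,D=\{a\in D\mid\exists\delta>0,\ B(a;\delta)\cap\mathrm{aff}\,D\subset D\}$. For nonempty $\Omega$, $\bar z\in\Omega$, $\varepsilon\ge0$: $N_\varepsilon(\bar z;\Omega)=\{\xi\mid\langle\xi,z-\bar z\rangle\le\varepsilon\ \forall z\in\Omega\}$. The $\varepsilon$-coderivative at $(\bar x,\bar y)\in\mathrm{gph}\,F$ is $D^*_\varepsilon F(\bar x,\bar y)(v)=\{u\in\mathbb{R}^n\mid(u,-v)\in N_\varepsilon((\bar x,\bar y);\mathrm{gph}\,F)\}$. The union over the $v_i$ ranges over all $v_1,\dots,v_p\in\mathbb{R}^m$ summing to $v$; sums of sets are Minkowski sums. *)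

(* Defs.v *)
From HB Require Import structures.
From mathcomp Require Import all_boot all_order all_algebra.
From mathcomp Require Import classical_sets reals.
Set Implicit Arguments. Unset Strict Implicit. Unset Printing Implicit Defensive.
Import Order.TTheory GRing.Theory Num.Theory.
Local Open Scope ring_scope.
Local Open Scope classical_set_scope.

Section Defs.
Variable R : realType.

Definition dotv (d : nat) (u w : 'rV[R]_d) : R := \sum_(i < d) u ord0 i * w ord0 i.

Definition sqdist (d : nat) (a b : 'rV[R]_d) : R := dotv (a - b) (a - b).

Definition convex_set (d : nat) (E : set 'rV[R]_d) : Prop :=
  forall a b t, E a -> E b -> 0 <= t -> t <= 1 -> E (t *: a + (1 - t) *: b).

Definition eclosure (d : nat) (E : set 'rV[R]_d) : set 'rV[R]_d :=
  [set z | forall e : R, 0 < e -> exists w, E w /\ sqdist z w < e ^+ 2].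

Definition nearly_convex (d : nat) (D : set 'rV[R]_d) : Prop :=
  exists E : set 'rV[R]_d, convex_set E /\ E `<=` D /\ D `<=` eclosure E.

Definition aff (d : nat) (D : set 'rV[R]_d) : set 'rV[R]_d :=
  [set z | exists (k : nat) (w : 'I_k -> 'rV[R]_d) (c : 'I_k -> R),
     (forall i, D (w i)) /\ \sum_(i < k) c i = 1 /\ z = \sum_(i < k) c i *: w i].

Definition ri (d : nat) (D : set 'rV[R]_d) : set 'rV[R]_d :=
  [set a | D a /\ exists delta : R, 0 < delta /\
     forall z, sqdist z a < delta ^+ 2 -> aff D z -> D z].

Definition eps_normal (d : nat) (eps : R) (zbar : 'rV[R]_d) (Om : set 'rV[R]_d)
  : set 'rV[R]_d :=
  [set xi | forall z, Om z -> dotv xi (z - zbar) <= eps].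

Definition gph (n m : nat) (F : 'rV[R]_n -> set 'rV[R]_m) : set 'rV[R]_(n + m) :=
  [set z | F (lsubmx z) (rsubmx z)].

Definition nearly_convex_map (n m : nat) (F : 'rV[R]_n -> set 'rV[R]_m) : Prop :=
  nearly_convex (gph F).

Definition eps_coderiv (n m : nat) (eps : R) (F : 'rV[R]_n -> set 'rV[R]_m)
  (xb : 'rV[R]_n) (yb : 'rV[R]_m) (v : 'rV[R]_m) : set 'rV[R]_n :=
  [set u | eps_normal eps (row_mx xb yb) (gph F) (row_mx u (- v))].

Definition map_cap (p n m : nat) (F : 'I_p -> 'rV[R]_n -> set 'rV[R]_m)
  : 'rV[R]_n -> set 'rV[R]_m :=
  fun x => [set y | forall i, F i x y].

End Defs.

(* Main.v *)
Require Import Defs.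
From HB Require Import structures.
From mathcomp Require Import all_boot all_order all_algebra.
From mathcomp Require Import classical_sets reals boolp.
From mathcomp Require Import ring lra.
Import Order.TTheory GRing.Theory Num.Theory.
Set Implicit Arguments. Unset Strict Implicit. Unset Printing Implicit Defensive.
Local Open Scope ring_scope.
Local Open Scope classical_set_scope.

Section Sep.
Variable R : realType.

Definition lf (I : finType) (c x : I -> R) : R := \sum_i c i * x i.

Lemma lf_comb (I : finType) (c x y : I -> R) s t :
  lf c (fun i => s * x i + t * y i) = s * lf c x + t * lf c y.
Proof.
rewrite /lf !mulr_sumr -big_split; apply: eq_bigr => i _ /=; ring.
Qed.

Lemma lf_scl (I : finType) (c x : I -> R) s :
  lf c (fun i => s * x i) = s * lf c x.
Proof. rewrite /lf mulr_sumr; apply: eq_bigr => i _ /=; ring. Qed.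

Lemma lf_ind (I : finType) (i0 : I) (a : R) (x : I -> R) :
  lf (fun i => if i == i0 then a else 0) x = a * x i0.
Proof.
rewrite /lf (bigD1 i0) //= eqxx big1 ?addr0 // => i /negbTE ->; by rewrite mul0r.
Qed.

Lemma lf_add (I : finType) (c d x : I -> R) :
  lf (fun i => c i + d i) x = lf c x + lf d x.
Proof. rewrite /lf -big_split; apply: eq_bigr => i _ /=; ring. Qed.

Lemma cone_sep (I : finType) n : forall (A : {set I}), #|~: A| = n ->
  forall K : set (I -> R),
  (forall x y, K x -> K y -> K (fun i => x i + y i)) ->
  (forall t x, 0 < t -> K x -> K (fun i => t * x i)) ->
  (forall x, K x -> exists i, x i != 0) ->
  (exists x, K x) ->
  (forall x, K x -> forall i, i \in A -> x i = 0) ->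
  exists c, (forall x, K x -> 0 <= lf c x) /\ exists x, K x /\ 0 < lf c x.
Proof.
elim: n => [|n IH] A hA K Kadd Kscl Knz [x0 Kx0] KA.
  exfalso; have [i /eqP hi] := Knz _ Kx0; apply: hi; apply: KA => //.
  have : i \notin ~: A by rewrite (cards0_eq hA) inE.
  by rewrite inE negbK.
have : (0 < #|~: A|)%N by rewrite hA.
case/card_gt0P => i0 hi0.
have hA' : #|~: (i0 |: A)| = n.
  have -> : ~: (i0 |: A) = (~: A) :\ i0.
    by apply/setP => i; rewrite !inE negb_or andbC.
  have := cardsD1 i0 (~: A); rewrite hi0 hA add1n; by case.
have KA' : forall x, K x -> x i0 = 0 -> forall i, i \in i0 |: A -> x i = 0.
  move=> x Kx x0' i; rewrite in_setU1 => /orP [/eqP -> //|iA]; exact: KA.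
case: (pselect (exists x, K x /\ 0 < x i0)) => [[xp [Kxp hxp]]|npos];
  case: (pselect (exists x, K x /\ x i0 < 0)) => [[xn [Kxn hxn]]|nneg].
- pose S := fun x => K x /\ x i0 = 0.
  have SK : forall x x', K x -> K x' -> 0 < x i0 -> x' i0 < 0 ->
      S (fun i => (- x' i0) * x i + (x i0) * x' i).
    move=> x x' Kx Kx' hx hx'; split.
      by apply: Kadd; apply: Kscl => //; rewrite oppr_gt0.
    rewrite /=; ring.
  have [g [gS [s0 [Ss0 gs0]]]] : exists c, (forall x, S x -> 0 <= lf c x) /\
      exists x, S x /\ 0 < lf c x.
    apply: (IH (i0 |: A)) => //.
    - by move=> x y [Kx x0'] [Ky y0]; split; [exact: Kadd|rewrite x0' y0 addr0].
    - by move=> t x ht [Kx x0']; split; [exact: Kscl|rewrite x0' mulr0].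
    - by move=> x [Kx _]; exact: Knz.
    - by exists (fun i => (- xn i0) * xp i + (xp i0) * xn i); exact: SK.
    - by move=> x [Kx x0']; exact: KA'.
  have key : forall x x', K x -> K x' -> 0 < x i0 -> x' i0 < 0 ->
      - lf g x / x i0 <= lf g x' / (- x' i0).
    move=> x x' Kx Kx' hx hx'.
    have := gS _ (SK _ _ Kx Kx' hx hx'); rewrite lf_comb => h.
    have hb : 0 < - x' i0 by rewrite oppr_gt0.
    rewrite ler_pdivrMr // mulrAC ler_pdivlMr //; nra.
  pose U := [set r | exists x, K x /\ 0 < x i0 /\ r = - lf g x / x i0].
  have hU : has_sup U.
    split; first by exists (- lf g xp / xp i0); exists xp.
    exists (lf g xn / (- xn i0)) => r [x [Kx [hx ->]]]; exact: key.
  pose c0 := sup U.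
  exists (fun i => g i + (if i == i0 then c0 else 0)).
  have lff : forall x, lf (fun i => g i + (if i == i0 then c0 else 0)) x =
      lf g x + c0 * x i0 by move=> x; rewrite lf_add lf_ind.
  split.
    move=> x Kx; rewrite lff; case: (ltgtP (x i0) 0) => hx.
    + have : c0 <= lf g x / (- x i0).
        apply: ge_sup; first by exists (- lf g xp / xp i0); exists xp.
        by move=> r [y [Ky [hy ->]]]; exact: key.
      have hb : 0 < - x i0 by rewrite oppr_gt0.
      rewrite ler_pdivlMr // => h; nra.
    + have : - lf g x / x i0 <= c0.
        by apply: sup_upper_bound => //; exists x.
      rewrite ler_pdivrMr // => h; nra.
    + by rewrite hx mulr0 addr0; apply: gS.
  exists s0; split; first by case: Ss0.
  by rewrite lff; case: Ss0 => _ ->; rewrite mulr0 addr0.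
- exists (fun i => if i == i0 then 1 else 0); split.
    move=> x Kx; rewrite lf_ind mul1r leNgt; apply/negP => h; apply: nneg.
    by exists x.
  by exists xp; split => //; rewrite lf_ind mul1r.
- exists (fun i => if i == i0 then -1 else 0); split.
    move=> x Kx; rewrite lf_ind mulN1r oppr_ge0 leNgt; apply/negP => h.
    by apply: npos; exists x.
  by exists xn; split => //; rewrite lf_ind mulN1r oppr_gt0.
- apply: (IH (i0 |: A)) => //; first by exists x0.
  move=> x Kx; apply: KA' => //.
  case: (ltgtP (x i0) 0) => // h; [apply: False_ind; apply: nneg|
     apply: False_ind; apply: npos]; by exists x.
Qed.

Lemma convex_sep (I : finType) (G : set (I -> R)) :
  (forall a b t, G a -> G b -> 0 <= t -> t <= 1 ->
     G (fun i => t * a i + (1 - t) * b i)) ->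
  (forall x, G x -> exists i, x i != 0) ->
  (exists x, G x) ->
  exists c, (forall x, G x -> 0 <= lf c x) /\ exists x, G x /\ 0 < lf c x.
Proof.
move=> Gc Gnz [x0 Gx0].
pose K := fun y : I -> R => exists s x, 0 < s /\ G x /\ y = (fun i => s * x i).
have [c [cK [y [[s [x1 [hs [Gx1 ->]]]] hy]]]] :
    exists c, (forall x, K x -> 0 <= lf c x) /\ exists x, K x /\ 0 < lf c x.
  apply: (@cone_sep I #|~: (finset.set0 : {set I})| finset.set0) => //.
  - move=> _ _ [s [x [hs [Gx ->]]]] [s' [x' [hs' [Gx' ->]]]].
    have hss : 0 < s + s' by rewrite addr_gt0.
    exists (s + s'), (fun i => (s / (s + s')) * x i + (1 - s / (s + s')) * x' i).
    split => //; split.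
      apply: Gc => //; first by rewrite divr_ge0 // ltW.
      by rewrite ler_pdivrMr // mul1r lerDl ltW.
    apply: funext => i /=; field; by rewrite gt_eqF.
  - move=> t _ ht [s [x [hs [Gx ->]]]]; exists (t * s), x; split.
      exact: mulr_gt0.
    by split => //; apply: funext => i; rewrite mulrA.
  - move=> _ [s [x [hs [Gx ->]]]]; have [i hi] := Gnz _ Gx; exists i.
    by rewrite mulf_neq0 // gt_eqF.
  - by exists x0, 1, x0; split => //; split => //; apply: funext => i; rewrite mul1r.
  - by move=> x ? i; rewrite inE.
exists c; split.
  move=> x Gx; have := cK (fun i => 1 * x i).
  rewrite lf_scl mul1r; apply; exists 1, x; split => //.
exists x1; split => //; move: hy; rewrite lf_scl => hy.
by rewrite -(pmulr_rgt0 _ hs).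
Qed.


Section Dot.
Variable d : nat.
Implicit Types a b c x z w : 'rV[R]_d.

Lemma dotvDl a b c : dotv (a + b) c = dotv a c + dotv b c.
Proof. rewrite /dotv -big_split; apply: eq_bigr => i _ /=; rewrite mxE; ring. Qed.
Lemma dotvDr a b c : dotv c (a + b) = dotv c a + dotv c b.
Proof. rewrite /dotv -big_split; apply: eq_bigr => i _ /=; rewrite mxE; ring. Qed.
Lemma dotvZl s a c : dotv (s *: a) c = s * dotv a c.
Proof. rewrite /dotv mulr_sumr; apply: eq_bigr => i _ /=; rewrite mxE; ring. Qed.
Lemma dotvZr s a c : dotv c (s *: a) = s * dotv c a.
Proof. rewrite /dotv mulr_sumr; apply: eq_bigr => i _ /=; rewrite mxE; ring. Qed.
Lemma dotvNl a c : dotv (- a) c = - dotv a c.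
Proof. by rewrite -scaleN1r dotvZl mulN1r. Qed.
Lemma dotvNr a c : dotv c (- a) = - dotv c a.
Proof. by rewrite -scaleN1r dotvZr mulN1r. Qed.
Lemma dotvBr a b c : dotv c (a - b) = dotv c a - dotv c b.
Proof. by rewrite dotvDr dotvNr. Qed.
Lemma dotvBl a b c : dotv (a - b) c = dotv a c - dotv b c.
Proof. by rewrite dotvDl dotvNl. Qed.
Lemma dotv0l c : dotv 0 c = 0.
Proof. by rewrite /dotv big1 // => i _; rewrite mxE mul0r. Qed.
Lemma dotv0r c : dotv c 0 = 0.
Proof. by rewrite /dotv big1 // => i _; rewrite mxE mulr0. Qed.
Lemma dotv_suml p (A : 'I_p -> 'rV[R]_d) c :
  dotv (\sum_i A i) c = \sum_i dotv (A i) c.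
Proof.
elim/big_rec2: _ => [|i x y _ <-]; first by rewrite dotv0l.
by rewrite dotvDl.
Qed.
Lemma dotv_sumr p (A : 'I_p -> 'rV[R]_d) c :
  dotv c (\sum_i A i) = \sum_i dotv c (A i).
Proof.
elim/big_rec2: _ => [|i x y _ <-]; first by rewrite dotv0r.
by rewrite dotvDr.
Qed.
Lemma dotv_ge0 a : 0 <= dotv a a.
Proof. by apply: sumr_ge0 => i _; rewrite -expr2 sqr_ge0. Qed.

Lemma dotv_eq0 a : dotv a a = 0 -> a = 0.
Proof.
move=> h; apply/rowP => j; rewrite mxE.
have H : forall i : 'I_d, true -> a ord0 i * a ord0 i = 0.
  apply: psumr_eq0P => // i _; by rewrite -expr2 sqr_ge0.
have /eqP := H j isT; rewrite mulf_eq0 orbb => /eqP hj.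
by rewrite -[RHS]hj; congr (a _ j); apply: val_inj.
Qed.

Lemma dotv_ub0 a C : (forall x, dotv a x <= C) -> a = 0.
Proof.
move=> h; apply: dotv_eq0; apply/eqP; rewrite eq_le dotv_ge0 andbT.
rewrite leNgt; apply/negP => hq.
have := h (((`|C| + 1) / dotv a a) *: a); rewrite dotvZr mulfVK ?gt_eqF //.
have := ler_norm C; lra.
Qed.

Lemma dotv_bound a z w e : 0 < e -> sqdist z w < e ^+ 2 ->
  dotv a (z - w) <= (\sum_j `|a ord0 j|) * e.
Proof.
move=> he hzw; rewrite /dotv mulr_suml; apply: ler_sum => j _.
have hj : (z - w) ord0 j * (z - w) ord0 j < e * e.
  apply: le_lt_trans hzw; rewrite -expr2 /sqdist /dotv (bigD1 j) //= lerDl.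
  by apply: sumr_ge0 => i _; rewrite -expr2 sqr_ge0.
have hd : `|(z - w) ord0 j| <= e.
  rewrite ler_norml; apply/andP; split; nra.
apply: le_trans (ler_norm _) _; rewrite normrM; apply: ler_wpM2l => //.
Qed.

Lemma approx (E : set 'rV[R]_d) a B z :
  (forall w, E w -> dotv a w <= B) -> eclosure E z -> dotv a z <= B.
Proof.
move=> hE hz; rewrite leNgt; apply/negP => hlt.
have hM : 0 <= \sum_j `|a ord0 j| by apply: sumr_ge0.
move: (\sum_j `|a ord0 j|) hM (@dotv_bound a z) => M hM hb.
have [del hdelE] : exists del, del = dotv a z - B by eexists.
have hdel : 0 < del by rewrite hdelE subr_gt0.
have he : 0 < del / (M + 1) by rewrite divr_gt0 // ltr_wpDl.
have [w [Ew hw]] := hz _ he.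
have h1 := hb _ _ he hw.
have h2 := hE _ Ew.
have h3 : M * (del / (M + 1)) < del.
  rewrite mulrA ltr_pdivrMr ?ltr_wpDl //; nra.
have := dotvBr z w a; lra.
Qed.

Lemma approxB (E : set 'rV[R]_d) a b B z :
  (forall w, E w -> dotv a (w - b) <= B) -> eclosure E z -> dotv a (z - b) <= B.
Proof.
move=> hE hz; rewrite dotvBr lerBlDr; apply: approx hz => w Ew.
by rewrite -lerBlDr -dotvBr; apply: hE.
Qed.

End Dot.

Lemma lim_lemma (mu A S : R) : 0 <= mu -> (forall t, t < A -> mu * t <= S) ->
  mu * A <= S.
Proof.
move=> hmu H; rewrite leNgt; apply/negP => h.
move: hmu; rewrite le_eqVlt => /orP [/eqP hm0 | hm].
  have := H (A - 1) ltac:(lra); rewrite -hm0 mul0r; rewrite -hm0 mul0r in h.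
  lra.
have hS : S / mu < A by rewrite ltr_pdivrMr // mulrC.
have := H ((S / mu + A) / 2) ltac:(lra).
have -> : mu * ((S / mu + A) / 2) = (S + mu * A) / 2.
  by field; rewrite gt_eqF.
lra.
Qed.

Lemma sum_dotvB d p (a c : 'I_p -> 'rV[R]_d) x :
  \sum_i dotv (a i) (c i - x) = \sum_i dotv (a i) (c i) - dotv (\sum_i a i) x.
Proof.
rewrite dotv_suml -sumrB; apply: eq_bigr => i _; by rewrite dotvBr.
Qed.

Lemma sep_step (d p : nat) (D E : 'I_p -> set 'rV[R]_d)
  (Ec : forall i, convex_set (E i)) (ED : forall i, E i `<=` D i)
  (DE : forall i, D i `<=` eclosure (E i))
  (z0 : 'rV[R]_d) (hz0 : forall i, ri (D i) z0)
  (w0 : 'I_p -> 'rV[R]_d) (hw0 : forall i, E i (w0 i))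
  (xi : 'rV[R]_d) (beta : R) (hD : forall x, (forall i, D i x) -> dotv xi x <= beta) :
  exists xs : 'I_p -> 'rV[R]_d, \sum_i xs i = xi /\
    forall c, (forall i, E i (c i)) -> \sum_i dotv (xs i) (c i) <= beta.
Proof.
pose I := (('I_p * 'I_d) + 'I_1)%type.
pose mk := fun (c : 'I_p -> 'rV[R]_d) (x : 'rV[R]_d) (t : R) (k : I) =>
  match k with inl pr => c pr.1 ord0 pr.2 - x ord0 pr.2 | inr _ => t end.
pose G := fun g : I -> R => exists c x t, (forall i, E i (c i)) /\
  t < dotv xi x - beta /\ g = mk c x t.
have [kap [hk [g0 [Gg0 hg0]]]] : exists c, (forall x, G x -> 0 <= lf c x) /\
    exists x, G x /\ 0 < lf c x.
  apply: convex_sep.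
  - move=> _ _ l [c [x [t [hc [ht ->]]]]] [c' [x' [t' [hc' [ht' ->]]]]] hl0 hl1.
    exists (fun i => l *: c i + (1 - l) *: c' i), (l *: x + (1 - l) *: x'),
      (l * t + (1 - l) * t').
    split; first by move=> i; apply: Ec.
    split.
      rewrite dotvDr !dotvZr.
      case: (ltP 0 l) => hl.
        have h1 : l * t < l * (dotv xi x - beta) by rewrite ltr_pM2l.
        have h2 : (1 - l) * t' <= (1 - l) * (dotv xi x' - beta).
          by rewrite ler_wpM2l ?subr_ge0 // ltW.
        lra.
      have -> : l = 0 by apply/le_anti; rewrite hl hl0.
      lra.
    by apply: funext => -[[i j]|k] /=; rewrite ?mxE //; ring.
  - move=> _ [c [x [t [hc [ht ->]]]]].
    case: (pselect (exists k, mk c x t k != 0)) => // hno; exfalso.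
    have hk0 : forall k, mk c x t k = 0.
      by move=> k; case: (eqVneq (mk c x t k) 0) => // h; exfalso; apply: hno; exists k.
    have ht0 : t = 0 := hk0 (inr ord0).
    have hcx : forall i, c i = x.
      move=> i; apply/rowP => j; apply/eqP; rewrite -subr_eq0; apply/eqP.
      exact: (hk0 (inl (i, j))).
    have := hD x (fun i => ED i _ (eq_ind _ (E i) (hc i) _ (hcx i))).
    lra.
  - exists (mk w0 0 (- beta - 1)), w0, 0, (- beta - 1).
    by split => //; split => //; rewrite dotv0r; lra.
pose eta := fun i => \row_(j < d) kap (inl (i, j)).
pose lam := kap (inr ord0).
have lfE : forall c x t, lf kap (mk c x t) =
    \sum_i dotv (eta i) (c i - x) + lam * t.
  move=> c x t; rewrite /lf big_sumType /= big_ord1; congr (_ + _).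
  rewrite /dotv pair_bigA /=; apply: eq_bigr => -[i j] _ /=.
  by rewrite !mxE.
have hk' : forall c x t, (forall i, E i (c i)) -> t < dotv xi x - beta ->
    0 <= \sum_i dotv (eta i) (c i - x) + lam * t.
  by move=> c x t hc ht; rewrite -lfE; apply: hk; exists c, x, t.
move: Gg0 hg0 => [c0 [x0 [t0 [hc0 [ht0 ->]]]]]; rewrite lfE => hg0.
have hlam : lam <= 0.
  rewrite leNgt; apply/negP => hl.
  have [S hS] : exists S, S = \sum_i dotv (eta i) (w0 i - 0) by eexists.
  have [q hq] : exists q, q = (S * S + 2) / lam by eexists.
  have hS2 : 0 < S * S + 2 by have := sqr_ge0 S; rewrite expr2; lra.
  have hq0 : 0 < q by rewrite hq divr_gt0.
  have hlq : lam * q = S * S + 2 by rewrite hq mulrC divfK // gt_eqF.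
  have ht : - q - beta * beta - 1 < dotv xi 0 - beta.
    rewrite dotv0r; nra.
  have := hk' w0 0 _ hw0 ht; rewrite -hS.
  have -> : lam * (- q - beta * beta - 1) = - (lam * q) - lam * (beta * beta + 1)
    by ring.
  rewrite hlq.
  have hb1 : 0 < beta * beta + 1 by nra.
  have := mulr_gt0 hl hb1.
  nra.
have hmain : forall c x, (forall i, E i (c i)) ->
    - lam * (dotv xi x - beta) <= \sum_i dotv (eta i) (c i - x).
  move=> c x hc; apply: lim_lemma; first by rewrite oppr_ge0.
  move=> t ht; have := hk' c x t hc ht; lra.
have hmu : 0 < - lam.
  rewrite lt_neqAle oppr_ge0 hlam andbT; apply/negP => /eqP hl0.
  have hl : lam = 0 by rewrite -[lam]opprK -hl0 oppr0.
  have hS0 : forall c x, (forall i, E i (c i)) ->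
      0 <= \sum_i dotv (eta i) (c i - x).
    move=> c x hc; have := hk' c x (dotv xi x - beta - 1) hc ltac:(lra).
    by rewrite hl mul0r addr0.
  have hz : \sum_i eta i = 0.
    apply: (@dotv_ub0 _ _ (\sum_i dotv (eta i) (w0 i))) => x.
    have := hS0 w0 x hw0; rewrite sum_dotvB; lra.
  have hpos : forall i c, E i c -> 0 <= dotv (eta i) (c - z0).
    move=> i c hc; rewrite leNgt; apply/negP => hneg.
    have [gam hgam] : exists gam, gam = - dotv (eta i) (c - z0) by eexists.
    have hg : 0 < gam by rewrite hgam oppr_gt0.
    have hp1 : 0 < p%:R + 1 :> R by rewrite ltr_wpDl.
    have hq : 0 < gam / (p%:R + 1) by rewrite divr_gt0.
    have hw : forall j, exists w, E j w /\ dotv (eta j) (w - z0) < gam / (p%:R + 1).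
      move=> j; case: (pselect (exists w, E j w /\
        dotv (eta j) (w - z0) < gam / (p%:R + 1))) => // hno; exfalso.
      have hall : forall w, E j w -> dotv (- eta j) (w - z0) <= - (gam / (p%:R + 1)).
        move=> w Ew; rewrite dotvNl lerN2 leNgt; apply/negP => h; apply: hno.
        by exists w.
      have := approxB hall (DE j _ (hz0 j).1); rewrite subrr dotv0r; lra.
    have [wf hwf] := choice hw.
    have hc' : forall j, E j ((fun j => if j == i then c else wf j) j).
      by move=> j; case: ifP => [/eqP ->|_] //; exact: (hwf j).1.
    have := hS0 _ z0 hc'.
    rewrite (bigD1 i) //= eqxx.
    have h1 : \sum_(j | j != i) dotv (eta j) ((if j == i then c else wf j) - z0)
        <= \sum_(j | j != i) gam / (p%:R + 1).
      by apply: ler_sum => j hj; rewrite (negbTE hj) ltW // (hwf j).2.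
    have h2 : \sum_(j | j != i) gam / (p%:R + 1) <= \sum_(j < p) gam / (p%:R + 1).
      by rewrite [X in _ <= X](bigD1 i) //= lerDr ltW.
    have h3 : \sum_(j < p) gam / (p%:R + 1) < gam.
      rewrite sumr_const card_ord -[gam / _ *+ _]mulr_natr mulrAC ltr_pdivrMr //; nra.
    lra.
  have hposD : forall i c, D i c -> 0 <= dotv (eta i) (c - z0).
    move=> i c hc.
    have hw : forall w, E i w -> dotv (- eta i) (w - z0) <= 0.
      by move=> w Ew; rewrite dotvNl oppr_le0; apply: hpos.
    have := approxB hw (DE i _ hc).
    by rewrite dotvNl oppr_le0.
  have hnegD : forall i c, D i c -> dotv (eta i) (c - z0) <= 0.
    move=> i c hc; have [hz0D [del [hdel hball]]] := hz0 i.
    have [q hqE] : exists q, q = sqdist c z0 by eexists.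
    have hq0 : 0 <= q by rewrite hqE; exact: dotv_ge0.
    have hd2 : 0 < del ^+ 2 by rewrite exprn_gt0.
    have hden : 0 < q + del ^+ 2 + 1 by lra.
    have [s hs] : exists s, s = del ^+ 2 / (q + del ^+ 2 + 1) by eexists.
    have hs0 : 0 < s by rewrite hs divr_gt0.
    have hs1 : s <= 1 by rewrite hs ler_pdivrMr // mul1r; lra.
    have hsq : s * q < del ^+ 2.
      by rewrite hs mulrAC ltr_pdivrMr //; nra.
    have hc'z : ((1 + s) *: z0 - s *: c) - z0 = (- s) *: (c - z0).
      by apply/rowP => j; rewrite !mxE; ring.
    have hin : D i ((1 + s) *: z0 - s *: c).
      apply: hball.
        rewrite /sqdist hc'z dotvZl dotvZr -/(sqdist c z0) -hqE.
        have : s * s * q <= s * q by rewrite ler_wpM2r // -[X in _ <= X]mul1r ler_wpM2r // ltW.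
        nra.
      exists 2%N, (fun k : 'I_2 => if k == ord0 then z0 else c),
        (fun k : 'I_2 => if k == ord0 then 1 + s else - s).
      split; first by move=> k; case: ifP.
      split; first by rewrite big_ord_recl big_ord1 /=; ring.
      by rewrite big_ord_recl big_ord1 /= scaleNr.
    have := hposD i _ hin; rewrite hc'z dotvZr; nra.
  have hzero : forall i c, E i c -> dotv (eta i) (c - z0) = 0.
    by move=> i c hc; apply/le_anti; rewrite hpos // hnegD //; apply: ED.
  move: hg0; rewrite hl mul0r addr0.
  have -> : \sum_i dotv (eta i) (c0 i - x0) =
      \sum_i (dotv (eta i) (c0 i - z0) + dotv (eta i) (z0 - x0)).
    by apply: eq_bigr => i _; rewrite -dotvDr addrA subrK.
  rewrite big_split /= big1 ?add0r; last by move=> i _; apply: hzero.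
  by rewrite -dotv_suml hz dotv0l ltxx.
pose mu := - lam.
have hzeta : \sum_i eta i = - (mu *: xi).
  apply/eqP; rewrite -addr_eq0; apply/eqP.
  apply: (@dotv_ub0 _ _ (\sum_i dotv (eta i) (w0 i) + mu * beta)) => x.
  have := hmain w0 x hw0; rewrite sum_dotvB dotvDl dotvZl /mu; lra.
exists (fun i => (- mu^-1) *: eta i); split.
  rewrite -scaler_sumr hzeta scalerN scaleNr opprK scalerA mulVf ?scale1r //.
  by rewrite gt_eqF.
move=> c hc.
have := hmain c 0 hc; rewrite dotv0r.
have -> : \sum_i dotv (eta i) (c i - 0) = \sum_i dotv (eta i) (c i).
  by apply: eq_bigr => i _; rewrite subr0.
have -> : \sum_i dotv (- mu^-1 *: eta i) (c i) = - mu^-1 * \sum_i dotv (eta i) (c i).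
  by rewrite mulr_sumr; apply: eq_bigr => i _; rewrite dotvZl.
move: (\sum_i dotv (eta i) (c i)) => T hT.
have : - beta <= mu^-1 * T.
  rewrite mulrC ler_pdivlMr //; rewrite /mu; lra.
lra.
Qed.


Lemma sum_row_mx (a b p : nat) (A : 'I_p -> 'rV[R]_a) (B : 'I_p -> 'rV[R]_b) :
  row_mx (\sum_i A i) (\sum_i B i) = \sum_i row_mx (A i) (B i).
Proof.
elim/big_rec3: _ => [|i x y z _ <-]; first by rewrite row_mx0.
by rewrite add_row_mx.
Qed.

Lemma normal_cap (d p : nat) (hp : (0 < p)%N) (D E : 'I_p -> set 'rV[R]_d)
  (Ec : forall i, convex_set (E i)) (ED : forall i, E i `<=` D i)
  (DE : forall i, D i `<=` eclosure (E i))
  (z0 : 'rV[R]_d) (hz0 : forall i, ri (D i) z0)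
  (eps : R) (heps : 0 <= eps) (zb : 'rV[R]_d) (hzb : forall i, D i zb)
  (xi : 'rV[R]_d) (hxi : forall z, (forall i, D i z) -> dotv xi (z - zb) <= eps) :
  exists e : 'I_p -> R, (forall i, 0 <= e i) /\ \sum_i e i = eps /\
    exists xs : 'I_p -> 'rV[R]_d, \sum_i xs i = xi /\
      forall i z, D i z -> dotv (xs i) (z - zb) <= e i.
Proof.
have hw : forall i, exists w, E i w.
  by move=> i; have [w [Ew _]] := DE i _ (hzb i) 1 ltr01; exists w.
have [w0 hw0] := choice hw.
have hD : forall x, (forall i, D i x) -> dotv xi x <= eps + dotv xi zb.
  by move=> x hx; have := hxi x hx; rewrite dotvBr; lra.
have [xs [hsum hb]] := sep_step Ec ED DE hz0 hw0 hD.
have Q : forall c, (forall i, E i (c i)) -> \sum_i dotv (xs i) (c i - zb) <= eps.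
  by move=> c hc; rewrite sum_dotvB hsum; have := hb c hc; lra.
pose S := fun i => [set r | exists c, E i c /\ r = dotv (xs i) (c - zb)].
have hS : forall i, has_sup (S i).
  move=> i; split; first by exists (dotv (xs i) (w0 i - zb)), (w0 i).
  exists (eps - \sum_(j | j != i) dotv (xs j) (w0 j - zb)) => r [c [hc ->]].
  have hc' : forall j, E j ((fun j => if j == i then c else w0 j) j).
    by move=> j; case: ifP => [/eqP ->|_].
  have := Q _ hc'; rewrite (bigD1 i) //= eqxx.
  have -> : \sum_(j | j != i) dotv (xs j) ((if j == i then c else w0 j) - zb) =
      \sum_(j | j != i) dotv (xs j) (w0 j - zb).
    by apply: eq_bigr => j hj; rewrite (negbTE hj).
  lra.
have hsD : forall i z, D i z -> dotv (xs i) (z - zb) <= sup (S i).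
  move=> i z hz; apply: approxB (DE i _ hz) => w Ew.
  by apply: sup_upper_bound (hS i) _ _; exists w.
have hs0 : forall i, 0 <= sup (S i).
  by move=> i; have := hsD i zb (hzb i); rewrite subrr dotv0r.
have hss : \sum_i sup (S i) <= eps.
  rewrite leNgt; apply/negP => hlt.
  have [del hdel] : exists del, del = \sum_i sup (S i) - eps by eexists.
  have hd : 0 < del by rewrite hdel subr_gt0.
  have hpR : 0 < p%:R :> R by rewrite ltr0n.
  have hq : 0 < del / (2 * p%:R) by rewrite divr_gt0 // mulr_gt0.
  have hr : forall i, exists c, E i c /\
      sup (S i) - del / (2 * p%:R) < dotv (xs i) (c - zb).
    move=> i; have [r [c [hc ->]] hr] := sup_adherent hq (hS i).
    by exists c.
  have [cf hcf] := choice hr.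
  have h1 := Q cf (fun i => (hcf i).1).
  have h2 : \sum_i (sup (S i) - del / (2 * p%:R)) <= \sum_i dotv (xs i) (cf i - zb).
    by apply: ler_sum => i _; apply: ltW; exact: (hcf i).2.
  move: h2; rewrite sumrB sumr_const card_ord -[del / _ *+ _]mulr_natr.
  have -> : del / (2 * p%:R) * p%:R = del / 2 by field; rewrite gt_eqF.
  lra.
pose i0 := Ordinal hp.
exists (fun i => sup (S i) + (if i == i0 then eps - \sum_i sup (S i) else 0)).
split.
  by move=> i; have := hs0 i; case: ifP => _; lra.
split.
  have hind : forall a : R, \sum_(i < p) (if i == i0 then a else 0) = a.
    by move=> a; rewrite (bigD1 i0) //= ?eqxx big1 ?addr0 // => i /negbTE ->.
  by rewrite big_split /= hind addrC subrK.
exists xs; split => // i z hz; have := hsD i z hz; case: ifP => _; lra.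
Qed.

End Sep.

Theorem mainTheorem7 (R : realType) (n m p : nat)
  (F : 'I_p -> 'rV[R]_n -> set 'rV[R]_m)
  (hp : (0 < p)%N)
  (hconv : forall i, nearly_convex_map (F i))
  (hri : exists z, forall i, ri (gph (F i)) z)
  (eps : R) (heps : 0 <= eps)
  (xb : 'rV[R]_n) (yb : 'rV[R]_m) (hgph : gph (map_cap F) (row_mx xb yb))
  (v : 'rV[R]_m) :
  eps_coderiv eps (map_cap F) xb yb v =
  [set u | exists e : 'I_p -> R,
      (forall i, 0 <= e i) /\ \sum_(i < p) e i = eps /\
      exists vs : 'I_p -> 'rV[R]_m, \sum_(i < p) vs i = v /\
      exists us : 'I_p -> 'rV[R]_n,
        (forall i, eps_coderiv (e i) (F i) xb yb (vs i) (us i)) /\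
        u = \sum_(i < p) us i].
Proof.
have [z0 hz0] := hri.
have hc' : forall i, exists E : set 'rV[R]_(n + m),
    convex_set E /\ E `<=` gph (F i) /\ gph (F i) `<=` eclosure E by exact: hconv.
have [Ef hEf] := choice hc'.
apply/seteqP; split => u.
- move=> hu.
  have hgph' : forall i, gph (F i) (row_mx xb yb) := fun i => hgph i.
  have hu' : forall z, (forall i, gph (F i) z) ->
      dotv (row_mx u (- v)) (z - row_mx xb yb) <= eps := fun z hz => hu z hz.
  have [e [he0 [hes [xs [hxs hxsb]]]]] := normal_cap hp
    (fun i => (hEf i).1) (fun i => (hEf i).2.1) (fun i => (hEf i).2.2)
    hz0 heps hgph' hu'.
  exists e; split => //; split => //.
  exists (fun i => - rsubmx (xs i)); split.
    rewrite sumrN.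
    have -> : \sum_i rsubmx (xs i) = rsubmx (\sum_i xs i) by rewrite raddf_sum.
    by rewrite hxs row_mxKr opprK.
  exists (fun i => lsubmx (xs i)); split.
    move=> i; rewrite /eps_coderiv /eps_normal /= opprK hsubmxK => z hz.
    exact: hxsb.
  have -> : \sum_i lsubmx (xs i) = lsubmx (\sum_i xs i) by rewrite raddf_sum.
  by rewrite hxs row_mxKl.
- move=> [e [he0 [hes [vs [hvs [us [hus ->]]]]]]].
  rewrite /eps_coderiv /eps_normal /= => z hz.
  rewrite -hvs -sumrN sum_row_mx dotv_suml -hes; apply: ler_sum => i _.
  exact: (hus i z (hz i)).
Qed.
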